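(* Let $G$ be a splittable query graph and $C_1,C_2\in\mathrm{Eq}$ with $C_1\ne C_2$. Then (1) either $C_1\notin coupled^+(C_2)$ or $C_2\notin coupled^+(C_1)$; and (2) if $C_1\in coupled^+(C_2)$, then $coupled^+(C_1)\subsetneq coupled^+(C_2)$.
   Context: $G=G[Q]$ is the query graph of a Boolean CQ without self-joins with atoms $R(u,v)$, $u\ne v$, first attribute the key: vertices are variables, each atom gives an edge $e_R=(u_R,v_R)$, consistent/inconsistent according to the type of $R$; $E^i$ = inconsistent edges. Paths may have zero edges; $x\leadsto y$ denotes a directed path, undirected paths ignore directions; for a path $P$ and vertex set $N$, $P\cap N$ is the set of vertices of $P$ (endpoints included) in $N$. $u^+=\{v:u\leadsto v\}$, $u^{+,R}=\{v: u\leadsto v$ in $G-\{e_R\}\}$. For $R,S\in E^i$: $R\sim S$ iff $u_S\in u_R^+$ and $u_R\in u_S^+$; $[R]$ the class of $R$; $coupled^+(R)=[R]\cup\{S\in E^i:\exists$ undirected path $P$ from $v_R$ to $u_S$ with $P\cap u_R^{+,R}=\emptyset\}$; $G$ is splittable if there are no $R,S\in E^i$ with $R\in coupled^+(S)$, $S\in coupled^+(R)$ and $R\not\sim S$. $\mathrm{Eq}$ is the set of $\sim$-classes of $E^i$. For $C\in\mathrm{Eq}$, $C^+=\bigcap_{R\in C}u_R^{+,R}$ and $coupled^+(C)=\{C\}\cup\{C'\in\mathrm{Eq}:\exists R\in C,S\in C'$ and an undirected path $P$ from $v_R$ to $u_S$ with $P\cap C^+=\emptyset\}$. *)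

(* Defs.v *)
(* A query graph: vertex type V (variables), edge type E
   (atoms; self-join-free so each atom is its own relation), edge e_R goes
   from src R = u_R to tgt R = v_R; inc is the set E^i of inconsistent edges. *)
From mathcomp Require Import all_boot.
Set Implicit Arguments. Unset Strict Implicit. Unset Printing Implicit Defensive.

Section QueryGraph.
Variables (V E : finType) (src tgt : E -> V) (inc : {set E}).

Definition dedge : rel V := fun x y => [exists e, (src e == x) && (tgt e == y)].
Definition dedge_wo (R : E) : rel V :=
  fun x y => [exists e, [&& e != R, src e == x & tgt e == y]].
Definition uedge : rel V := fun x y => dedge x y || dedge y x.

(* u^+ and u^{+,R} (paths may have zero edges: connect is reflexive) *)
Definition reach (u : V) : {set V} := [set v | connect dedge u v].
Definition reach_wo (R : E) (u : V) : {set V} := [set v | connect (dedge_wo R) u v].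

Definition equivR (R S : E) : bool :=
  (src S \in reach (src R)) && (src R \in reach (src S)).

Definition eqclass (R : E) : {set E} := [set S in inc | equivR R S].

(* exists an undirected path P from x to y with P \cap N = empty
   (all vertices of P, endpoints included, avoid N): x avoids N and y is
   reachable from x by undirected edges whose endpoints avoid N *)
Definition upath_avoid (N : {set V}) (x y : V) : bool :=
  (x \notin N) && connect (fun a b => uedge a b && (b \notin N)) x y.

Definition coupledE (R : E) : {set E} :=
  eqclass R :|: [set S in inc | upath_avoid (reach_wo R (src R)) (tgt R) (src S)].

Definition splittable : Prop :=
  ~ exists R S, [/\ R \in inc, S \in inc, R \in coupledE S, S \in coupledE R
                  & ~~ equivR R S].

Definition Eqc : {set {set E}} := [set C | [exists R in inc, C == eqclass R]].

Definition Cplus (C : {set E}) : {set V} := \bigcap_(R in C) reach_wo R (src R).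

Definition coupledC (C : {set E}) : {set {set E}} :=
  C |: [set C' in Eqc | [exists R in C, exists S in C',
                           upath_avoid (Cplus C) (tgt R) (src S)]].

End QueryGraph.

(* Main.v *)
Require Import Defs.
From mathcomp Require Import all_boot.
Set Implicit Arguments. Unset Strict Implicit. Unset Printing Implicit Defensive.

Lemma cind (T : finType) (e : rel T) (x : T) (P : T -> Prop) :
  P x -> (forall y z, connect e x y -> e y z -> P y -> P z) ->
  forall y, connect e x y -> P y.
Proof.
move=> Px IH y /connectP [p]; elim/last_ind: p y => [|p z IHp] y /=.
  by move=> _ ->.
rewrite rcons_path last_rcons => /andP[pp ez] ->.
apply: (IH (last x p)) => //; last exact: IHp.
by apply/connectP; exists p.
Qed.

Section S.
Variables (V E : finType) (src tgt : E -> V) (inc : {set E}).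
Local Notation cn := (connect (dedge src tgt)).
Local Notation NN R := (reach_wo src tgt R (src R)).
Local Notation av N := (fun a b : V => uedge src tgt a b && (b \notin (N : {set V}))).
Local Notation CN N := (connect (av N)).
Local Notation up := (upath_avoid src tgt).

Lemma avE (N : {set V}) x y : up N x y = (x \notin N) && connect (av N) x y.
Proof. by []. Qed.

Lemma endpt (N : {set V}) x y : x \notin N -> connect (av N) x y -> y \notin N.
Proof. move=> xN; apply: (@cind _ _ _ (fun y => y \notin N)) => // a b _ /andP[]. by []. Qed.

Lemma upE (N : {set V}) x y : up N x y -> y \notin N.
Proof. by case/andP => xN; apply: endpt. Qed.

Lemma up_mono (N N' : {set V}) x y : N' \subset N -> up N x y -> up N' x y.
Proof.
move=> sub /andP[xN c]; apply/andP; split.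
  by apply: contra xN; apply: (subsetP sub).
move: c; apply: connect_sub => a b /andP[ab bN]; apply: connect1; rewrite ab /=.
by apply: contra bN; apply: (subsetP sub).
Qed.

Lemma up_trans (N : {set V}) x y z : up N x y -> up N y z -> up N x z.
Proof. by case/andP=> xN c1 /andP[_ c2]; rewrite /upath_avoid xN (connect_trans c1 c2). Qed.

Lemma up_step (N : {set V}) x y : x \notin N -> y \notin N -> uedge src tgt x y -> up N x y.
Proof. by move=> xN yN xy; rewrite /upath_avoid xN connect1 // xy yN. Qed.

Lemma up0 (N : {set V}) x : x \notin N -> up N x x.
Proof. by move=> xN; rewrite /upath_avoid xN connect0. Qed.

Lemma dedgeP x y : reflect (exists e, src e = x /\ tgt e = y) (dedge src tgt x y).
Proof.
apply: (iffP existsP) => [[e /andP[/eqP a /eqP b]]|[e [a b]]]; exists e => //.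
by rewrite a b !eqxx.
Qed.

Lemma wo_sub R : subrel (dedge_wo src tgt R) (dedge src tgt).
Proof. by move=> x y /existsP[e /and3P[_ a b]]; apply/existsP; exists e; rewrite a b. Qed.

Lemma NN_reach R x : x \in NN R -> cn (src R) x.
Proof. rewrite inE; apply: connect_sub => a b ab. apply: connect1. exact: (wo_sub ab). Qed.

Lemma NN_src R : src R \in NN R.
Proof. by rewrite inE connect0. Qed.

Lemma NN_step R e : e != R -> src e \in NN R -> tgt e \in NN R.
Proof.
move=> eR; rewrite !inE => c; apply: (connect_trans c); apply: connect1.
by apply/existsP; exists e; rewrite eR !eqxx.
Qed.

Lemma uedge_d x y : dedge src tgt x y -> uedge src tgt x y.
Proof. by rewrite /uedge => ->. Qed.
Lemma uedge_sym x y : uedge src tgt x y = uedge src tgt y x.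
Proof. by rewrite /uedge orbC. Qed.

Lemma lemA R w : cn (src R) w -> w \notin NN R -> up (NN R) (tgt R) w.
Proof.
move=> c wN.
suff: w \in NN R \/ up (NN R) (tgt R) w by rewrite (negbTE wN); case.
move: w c {wN}; apply: cind; first by left; exact: NN_src.
move=> y z _ /dedgeP[e [ey ez]] [yN|uy].
  case: (boolP (z \in NN R)) => zN; first by left.
  have [eR|eR] := eqVneq e R.
    by move: zN; rewrite -ez eR => zN; right; apply: up0.
  by move: zN; rewrite -ez NN_step // ey.
case: (boolP (z \in NN R)) => zN; first by left.
right; have yN := upE uy; apply: (up_trans uy); apply: up_step => //.
by apply: uedge_d; apply/dedgeP; exists e.
Qed.


Lemma equivE R S : equivR src tgt R S = cn (src R) (src S) && cn (src S) (src R).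
Proof. by rewrite /equivR /reach !inE. Qed.

Lemma equivT R S T : equivR src tgt R S -> equivR src tgt S T -> equivR src tgt R T.
Proof.
rewrite !equivE => /andP[a b] /andP[c d].
by rewrite (connect_trans a c) (connect_trans d b).
Qed.

Lemma equivS R S : equivR src tgt R S -> equivR src tgt S R.
Proof. by rewrite !equivE andbC. Qed.

Lemma EqcP C : C \in Eqc src tgt inc -> exists2 R0, R0 \in inc & C = eqclass src tgt inc R0.
Proof. by rewrite inE => /exists_inP[R0 R0i /eqP->]; exists R0. Qed.

Lemma same C R S : C \in Eqc src tgt inc -> R \in C -> S \in C -> equivR src tgt R S.
Proof.
case/EqcP=> R0 _ ->; rewrite !inE => /andP[_ e1] /andP[_ e2].
exact: equivT (equivS e1) e2.
Qed.

Lemma inC_inc C R : C \in Eqc src tgt inc -> R \in C -> R \in inc.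
Proof. by case/EqcP=> R0 _ ->; rewrite !inE => /andP[]. Qed.

Lemma diffN C C' R S : C \in Eqc src tgt inc -> C' \in Eqc src tgt inc ->
  R \in C -> S \in C' -> C != C' -> ~~ equivR src tgt R S.
Proof.
move=> hC hC' RC SC ne; apply/negP => e; move/negP: ne; apply.
move: (RC) (SC); case/EqcP: hC => R1 _ ->; case/EqcP: hC' => R2 _ ->.
rewrite !inE => /andP[_ e1] /andP[_ e2].
have e12 : equivR src tgt R1 R2 := equivT e1 (equivT e (equivS e2)).
apply/eqP/setP => X; rewrite !inE; case: (X \in inc) => //=.
apply/idP/idP => h; [exact: equivT (equivS e12) h | exact: equivT e12 h].
Qed.

Lemma CplusN (C : {set E}) x : x \notin Cplus src tgt C -> exists2 R, R \in C & x \notin NN R.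
Proof.
move=> xN; case: (boolP [exists R in C, x \notin NN R]) => [/exists_inP[R ? ?]|/exists_inPn H].
  by exists R.
exfalso; move/negP: xN; apply; apply/bigcapP => R RC.
by have := H R RC; rewrite negbK.
Qed.

Lemma Cplus_sub (C : {set E}) R : R \in C -> Cplus src tgt C \subset NN R.
Proof. by move=> RC; apply: bigcap_inf. Qed.

Lemma lemK (C : {set E}) R' z : C \in Eqc src tgt inc -> R' \in C -> cn (src R') z ->
  z \notin Cplus src tgt C -> exists2 R3, R3 \in C & up (NN R3) (tgt R3) z.
Proof.
move=> hC R'C c zN; have [R3 R3C zN3] := CplusN zN; exists R3 => //.
apply: lemA => //; have := same hC R3C R'C; rewrite equivE => /andP[a _].
exact: connect_trans a c.
Qed.

Lemma lemB (C : {set E}) R y : C \in Eqc src tgt inc -> R \in C -> up (Cplus src tgt C) (tgt R) y ->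
  exists2 R'', R'' \in C & up (NN R'') (tgt R'') y.
Proof.
move=> hC RC /andP[tN c]; move: y c.
apply: (@cind _ _ _ (fun y => exists2 R'', R'' \in C & up (NN R'') (tgt R'') y)).
  apply: (lemK hC RC) => //; apply: connect1; apply/dedgeP; by exists R.
move=> y z _ /andP[yz zN] [R'' R''C u].
case: (boolP (z \in NN R'')) => h.
  exact: (lemK hC R''C (NN_reach h) zN).
exists R'' => //; exact: up_trans u (up_step (upE u) h yz).
Qed.

Lemma lemD R w y : w \in NN R -> cn w y -> y \in NN R \/ cn w (src R).
Proof.
move=> wN; move: y; apply: (@cind _ _ _ (fun y => y \in NN R \/ cn w (src R))).
  by left.
move=> y z cwy /dedgeP[e [ey ez]] [yN|c]; last by right.
have [eR|eR] := eqVneq e R.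
  by move: ey; rewrite eR => ey; right; rewrite ey.
by left; rewrite -ez; apply: NN_step; rewrite ?ey.
Qed.

Lemma lemF R S w : ~~ equivR src tgt R S -> src S \notin NN R -> cn (src S) w -> cn w (src S) -> w \notin NN R.
Proof.
move=> ne sN c1 c2; apply/negP => wN.
case: (lemD wN c2) => [h|h]; first by rewrite h in sN.
move/negP: ne; apply; rewrite equivE; apply/andP; split.
  exact: connect_trans (NN_reach wN) c2.
exact: connect_trans c1 h.
Qed.

Lemma lemE R S S' : ~~ equivR src tgt R S -> up (NN R) (tgt R) (src S) ->
  equivR src tgt S S' -> up (NN R) (tgt R) (src S').
Proof.
move=> ne u; rewrite equivE => /andP[c1 c2]; have sN := upE u.
apply: (up_trans u).
have key : forall y, cn (src S) y -> cn y (src S') -> up (NN R) (src S) y.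
  apply: (@cind _ _ _ (fun y => cn y (src S') -> up (NN R) (src S) y)).
    by move=> _; exact: up0.
  move=> y z cy yz IH czt.
  have u' := IH (connect_trans (connect1 yz) czt).
  have zN : z \notin NN R := lemF ne sN (connect_trans cy (connect1 yz)) (connect_trans czt c2).
  exact: up_trans u' (up_step (upE u') zN (uedge_d yz)).
exact: key c1 (connect0 _ _).
Qed.

Lemma lemH R1 R2 z : src R1 \notin NN R2 -> connect (dedge_wo src tgt R2) (src R2) z ->
  z \notin NN R1 -> up (NN R1) z (src R2).
Proof.
move=> s1; move: z.
apply: (@cind _ _ _ (fun z => z \notin NN R1 -> up (NN R1) z (src R2))).
  exact: up0.
move=> y z cy yz IH zN.
move: (yz) => /existsP[e /and3P[eR2 /eqP ey /eqP ez]].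
have yN : y \notin NN R1.
  apply/negP => yN; have [eR1|eR1] := eqVneq e R1.
    by move: s1; rewrite -eR1 ey inE cy.
  have h : src e \in NN R1 by rewrite ey.
  by have := NN_step eR1 h; rewrite ez (negbTE zN).
apply: up_trans (up_step zN yN _) (IH yN).
by rewrite uedge_sym; apply: uedge_d; apply: wo_sub yz.
Qed.

Lemma mutual R1 R2 : splittable src tgt inc -> R1 \in inc -> R2 \in inc ->
  ~~ equivR src tgt R1 R2 -> up (NN R2) (tgt R2) (src R1) -> up (NN R1) (tgt R1) (src R2) -> False.
Proof.
move=> hs i1 i2 ne a b; apply: hs; exists R1, R2; split => //.
  by rewrite /coupledE in_setU; apply/orP; right; rewrite inE i1.
by rewrite /coupledE in_setU; apply/orP; right; rewrite inE i2.
Qed.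

Lemma lemG R1 R2 y : splittable src tgt inc -> R1 \in inc -> R2 \in inc ->
  ~~ equivR src tgt R1 R2 -> up (NN R2) (tgt R2) (src R1) -> up (NN R1) (tgt R1) y -> y \notin NN R2.
Proof.
move=> hs i1 i2 ne u2 u1; apply/negP => yN2.
have s1 := upE u2.
apply: (mutual hs i1 i2 ne u2).
apply: (up_trans u1); apply: lemH s1 _ (upE u1).
by move: yN2; rewrite inE.
Qed.

Lemma transfer2 R1 R2 y : splittable src tgt inc -> R1 \in inc -> R2 \in inc ->
  ~~ equivR src tgt R1 R2 -> up (NN R2) (tgt R2) (src R1) -> up (NN R1) (tgt R1) y -> up (NN R2) (tgt R1) y.
Proof.
move=> hs i1 i2 ne u2 /andP[t1 c]; move: y c.
apply: (@cind _ _ _ (fun y => up (NN R2) (tgt R1) y)).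
  by apply: up0; apply: (lemG hs i1 i2 ne u2); apply: up0.
move=> y z cy /andP[yz zN1] IH.
have zN2 : z \notin NN R2.
  apply: (lemG hs i1 i2 ne u2); rewrite /upath_avoid t1 /=.
  by apply: (connect_trans cy); apply: connect1; rewrite yz zN1.
exact: up_trans IH (up_step (upE IH) zN2 yz).
Qed.

End S.

Theorem proposition5p6 (V E : finType) (src tgt : E -> V) (inc : {set E})
  (hloop : forall e : E, src e != tgt e)
  (hsplit : splittable src tgt inc)
  (C1 C2 : {set E})
  (h1 : C1 \in Eqc src tgt inc) (h2 : C2 \in Eqc src tgt inc) (hne : C1 != C2) :
  (C1 \notin coupledC src tgt inc C2 \/ C2 \notin coupledC src tgt inc C1) /\
  (C1 \in coupledC src tgt inc C2 ->
     coupledC src tgt inc C1 \proper coupledC src tgt inc C2).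
Proof.
have hne' : C2 != C1 by rewrite eq_sym.
have getc : C1 \in coupledC src tgt inc C2 -> exists R2, exists2 S,
   (R2 \in C2) && (S \in C1) &
   upath_avoid src tgt (reach_wo src tgt R2 (src R2)) (tgt R2) (src S).
  rewrite /coupledC in_setU1 (negbTE hne) /= inE.
  move=> /andP[_ /exists_inP[R RC2 /exists_inP[S SC1 u]]].
  have [R2 R2C u2] := lemB h2 RC2 u.
  by exists R2, S; rewrite ?R2C ?SC1.
have part1 : C1 \in coupledC src tgt inc C2 -> C2 \notin coupledC src tgt inc C1.
  move=> /getc [R2 [S /andP[R2C SC1] u2]]; apply/negP.
  rewrite in_setU1 eq_sym (negbTE hne) /= inE.
  move=> /andP[_ /exists_inP[R' RC1 /exists_inP[S' SC2 u']]].
  have [R1 R1C u1] := lemB h1 RC1 u'.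
  have n21 := diffN h2 h1 R2C SC1 hne'.
  have n12 := diffN h1 h2 R1C SC2 hne.
  have a := lemE n21 u2 (same h1 SC1 R1C).
  have b := lemE n12 u1 (same h2 SC2 R2C).
  exact: mutual hsplit (inC_inc h1 R1C) (inC_inc h2 R2C) (diffN h1 h2 R1C R2C hne) a b.
split.
  by case: (boolP (C1 \in coupledC src tgt inc C2)) => c; [right; exact: part1 c | left].
move=> c12; rewrite properE; apply/andP; split; last first.
  apply/negP => sub; move/negP: (part1 c12); apply; apply: (subsetP sub).
  exact: setU11.
have [R2 [S /andP[R2C SC1] u2]] := getc c12.
apply/subsetP => C' hC'; move: (hC'); rewrite in_setU1 => /orP[/eqP->//|].
rewrite inE => /andP[hC'E /exists_inP[R RC1 /exists_inP[T TC' uT]]].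
have [R1 R1C u1] := lemB h1 RC1 uT.
case: (eqVneq C' C2) => [->|ne2]; first exact: setU11.
have n21 := diffN h2 h1 R2C SC1 hne'.
have a := lemE n21 u2 (same h1 SC1 R1C).
have i1 := inC_inc h1 R1C; have i2 := inC_inc h2 R2C.
have ne := diffN h1 h2 R1C R2C hne.
have t := transfer2 hsplit i1 i2 ne a u1.
rewrite /coupledC in_setU1 (negbTE ne2) /= inE hC'E /=.
apply/exists_inP; exists R2 => //; apply/exists_inP; exists T => //.
apply: (up_mono (Cplus_sub src tgt R2C)).
apply: (up_trans a); apply: up_trans _ t; apply: up_step.
- exact: upE a.
- have t0 := transfer2 hsplit i1 i2 ne a (up0 src tgt (proj1 (andP u1))).
  exact: upE t0.
- by apply: uedge_d; apply/dedgeP; exists R1.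
Qed.
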